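(* Let $D_1,\dots,D_n$ be semi-interlaced polytopes in a finite set $\mathbf P\subset\mathbb Z^n$ with $P=\operatorname{Conv}\mathbf P$, and let $S$ be a suture. Then exactly $\dim S$ of the $D_i$ meet $S$. The polytopes $\{D_i\cap S\mid D_i\cap S\neq\emptyset\}$ are semi-interlaced in $\mathbf P\cap S$, viewed inside $\operatorname{aff}(S)$ with the lattice $\mathbb Z^n\cap\operatorname{aff}(S)$. That is: - each of them is a daughter polytope of $\mathbf P\cap S$; - every face $F$ of $S$ meets at least $\dim F$ of them.
   Context: **Daughter polytope.** For a nonempty polytope $D$ with vertices in a finite set $\mathbf Q$, let $\mathcal D(D)$ be the set of inclusion-maximal faces of $\operatorname{Conv}\mathbf Q$ disjoint from $D$. $D$ is a daughter polytope of $\mathbf Q$ if: 1. distinct members of $\mathcal D(D)$ are disjoint; 2. $D=\operatorname{Conv}(\mathbf Q\setminus\bigcup_{G\in\mathcal D(D)}G)$. **Semi-interlaced and sutures.** Daughter polytopes $D_1,\dots,D_n$ of $\mathbf P\subset\mathbb Z^n$ are semi-interlaced in $\mathbf P$ if every face $F$ of $P$ meets at least $\dim F$ of them. A suture is a face of $P$ meeting exactly $\dim F$ of them. *)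

(* Defs.v *)
From HB Require Import structures.
From mathcomp Require Import all_boot all_order all_algebra.
From mathcomp Require Import boolp classical_sets cardinality reals.
Set Implicit Arguments. Unset Strict Implicit. Unset Printing Implicit Defensive.
Import Order.TTheory GRing.Theory Num.Theory.
Local Open Scope classical_set_scope.
Local Open Scope ring_scope.

Section Polytopes.
Variables (R : realType) (n : nat).
Local Notation pt := 'rV[R]_n.

Definition dot (a y : pt) : R := \sum_(j < n) a 0 j * y 0 j.

Definition conv (Q : set pt) : set pt :=
  [set x | exists (s : seq pt) (w : 'I_(size s) -> R),
     [/\ (forall y, y \in s -> Q y), (forall i, 0 <= w i),
         \sum_(i < size s) w i = 1 & x = \sum_(i < size s) w i *: s`_i]].

(* F is a face of the convex set C: the intersection of C with the
   hyperplane of a valid inequality (includes C itself and the empty face) *)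
Definition face (C F : set pt) : Prop :=
  exists (a : pt) (b : R), (forall y, C y -> dot a y <= b) /\
    F = [set y | C y /\ dot a y = b].

Definition pmeets (A B : set pt) : Prop := exists x, A x /\ B x.

Definition aff_indep (s : seq pt) : bool :=
  if s is x :: t then row_free (\matrix_(i < size t) (t`_i - x)) else false.

(* has_dim S d : the (affine) dimension of the nonempty set S is d;
   the empty set has no such d (its dimension is -1). *)
Definition has_dim (S : set pt) (d : nat) : Prop :=
  (exists s : seq pt, [/\ size s = d.+1, (forall x, x \in s -> S x) & aff_indep s])
  /\ ~ (exists s : seq pt, [/\ size s = d.+2, (forall x, x \in s -> S x) & aff_indep s]).

Definition max_disj_face (Q D G : set pt) : Prop :=
  [/\ face (conv Q) G, ~ pmeets G D &
      forall G', face (conv Q) G' -> ~ pmeets G' D -> G `<=` G' -> G' = G].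

Definition daughter (Q D : set pt) : Prop :=
  [/\ D !=set0,
      (exists Q' : set pt, [/\ finite_set Q', Q' `<=` Q & D = conv Q']),
      (forall G G', max_disj_face Q D G -> max_disj_face Q D G' -> G <> G' ->
          ~ pmeets G G') &
      D = conv (Q `\` [set x | exists G, max_disj_face Q D G /\ G x])].

Definition nmeet (m : nat) (D : 'I_m -> set pt) (F : set pt) : nat :=
  #|[set i : 'I_m | `[< pmeets (D i) F >]]|.

Definition semi_interlaced (m : nat) (Q : set pt) (D : 'I_m -> set pt) : Prop :=
  (forall i, daughter Q (D i)) /\
  (forall F d, face (conv Q) F -> has_dim F d -> (d <= nmeet D F)%N).

Definition suture (m : nat) (Q : set pt) (D : 'I_m -> set pt) (S : set pt) : Prop :=
  face (conv Q) S /\ exists d, has_dim S d /\ nmeet D S = d.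

Definition integral_pt (x : pt) : Prop := forall j, x 0 j \is a Num.int.

End Polytopes.

(* Main.v *)
Require Import Defs.
From HB Require Import structures.
From mathcomp Require Import all_boot all_order all_algebra.
From mathcomp Require Import boolp classical_sets cardinality reals.
From mathcomp Require Import lra zify.
Import Order.TTheory GRing.Theory Num.Theory.
Local Open Scope ring_scope.
Local Open Scope classical_set_scope.
Set Implicit Arguments. Unset Strict Implicit.


Definition convN {R : realType} {n : nat} (Q : set 'rV[R]_n) : set 'rV[R]_n :=
  [set x | exists (s : seq 'rV[R]_n) (w : nat -> R),
     [/\ (forall y, y \in s -> Q y), (forall i, 0 <= w i),
         \sum_(i < size s) w i = 1 & x = \sum_(i < size s) w i *: s`_i]].

Lemma convE {R : realType} {n : nat} (Q : set 'rV[R]_n) : conv Q = convN Q.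
Proof.
apply/seteqP; split => x [s [w [H1 H2 H3 H4]]].
- exists s, (fun k => oapp w 0 (insub k)); split => //.
  + by move=> k; case: insub => //= i.
  + by rewrite -H3; apply: eq_bigr => i _; rewrite valK.
  + by rewrite H4; apply: eq_bigr => i _; rewrite valK.
- by exists s, (fun i => w (val i)).
Qed.

Lemma dotD {R : realType} {n : nat} (a x y : 'rV[R]_n) : dot a (x + y) = dot a x + dot a y.
Proof. by rewrite /dot -big_split; apply: eq_bigr => j _; rewrite mxE mulrDr. Qed.

Lemma dotZ {R : realType} {n : nat} (a x : 'rV[R]_n) c : dot a (c *: x) = c * dot a x.
Proof. by rewrite /dot mulr_sumr; apply: eq_bigr => j _; rewrite mxE mulrCA. Qed.

Lemma dot_sum {R : realType} {n : nat} (a : 'rV[R]_n) m (F : 'I_m -> 'rV[R]_n) :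
  dot a (\sum_(i < m) F i) = \sum_(i < m) dot a (F i).
Proof.
elim/big_rec2: _ => [|i y1 y2 _ <-]; last by rewrite dotD.
by rewrite /dot big1 // => j _; rewrite mxE mulr0.
Qed.

Lemma dotDl {R : realType} {n : nat} (a b x : 'rV[R]_n) : dot (a + b) x = dot a x + dot b x.
Proof. by rewrite /dot -big_split; apply: eq_bigr => j _; rewrite mxE mulrDl. Qed.

Lemma dotZl {R : realType} {n : nat} (a x : 'rV[R]_n) c : dot (c *: a) x = c * dot a x.
Proof. by rewrite /dot mulr_sumr; apply: eq_bigr => j _; rewrite mxE mulrA. Qed.



Lemma sub_convN {R : realType} {n : nat} (Q : set 'rV[R]_n) x : Q x -> convN Q x.
Proof.
move=> Qx; exists [:: x], (fun _ => 1); split => //.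
- by move=> y; rewrite inE => /eqP ->.
- by rewrite big_ord1.
- by rewrite big_ord1 scale1r.
Qed.

Lemma convN_mono {R : realType} {n : nat} (Q Q' : set 'rV[R]_n) :
  Q `<=` Q' -> convN Q `<=` convN Q'.
Proof. by move=> QQ x [s [w [H1 H2 H3 H4]]]; exists s, w; split => // y /H1 /QQ. Qed.

Lemma convN_dot {R : realType} {n : nat} (a y : 'rV[R]_n) (s : seq 'rV[R]_n) (w : nat -> R) :
  y = \sum_(i < size s) w i *: s`_i ->
  dot a y = \sum_(i < size s) w i * dot a s`_i.
Proof. by move=> ->; rewrite dot_sum; apply: eq_bigr => i _; rewrite dotZ. Qed.

Lemma convN_le {R : realType} {n : nat} (Q : set 'rV[R]_n) a b y :
  (forall q, Q q -> dot a q <= b) -> convN Q y -> dot a y <= b.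
Proof.
move=> Hq [s [w [H1 H2 H3 H4]]]; rewrite (convN_dot a H4).
rewrite -[b]mul1r -H3 mulr_suml; apply: ler_sum => i _.
by apply: ler_wpM2l => //; apply: Hq; apply: H1; apply: mem_nth.
Qed.

Lemma convN_eq {R : realType} {n : nat} (Q : set 'rV[R]_n) a b y :
  (forall q, Q q -> dot a q = b) -> convN Q y -> dot a y = b.
Proof.
move=> Hq [s [w [H1 H2 H3 H4]]]; rewrite (convN_dot a H4).
rewrite -[b]mul1r -H3 mulr_suml; apply: eq_bigr => i _.
by rewrite Hq //; apply: H1; apply: mem_nth.
Qed.

Lemma convN_face {R : realType} {n : nat} (Q : set 'rV[R]_n) a b y :
  (forall q, Q q -> dot a q <= b) -> convN Q y -> dot a y = b ->
  convN (Q `&` [set q | dot a q = b]) y.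
Proof.
move=> Hq [s [w [H1 H2 H3 H4]]] Hy.
have Hs : forall i : 'I_(size s), Q s`_i by move=> i; apply: H1; apply: mem_nth.
have H0 : \sum_(i < size s) w i * (b - dot a s`_i) = 0.
  under eq_bigr do rewrite mulrBr.
  by rewrite sumrB -mulr_suml H3 mul1r -(convN_dot a H4) Hy subrr.
have Hz : forall i : 'I_(size s), w i != 0 -> dot a s`_i = b.
  move=> i wi; move/eqP: H0; rewrite psumr_eq0 => [/allP /(_ i) |j _].
    rewrite mem_index_enum => /(_ isT) /implyP /(_ isT).
    by rewrite mulf_eq0 (negPf wi) /= subr_eq0 => /eqP.
  by rewrite mulr_ge0 // subr_ge0 Hq.
have [j0 wj0] : exists j : 'I_(size s), w j != 0.
  apply/not_existsP => Hn; move: H3; rewrite big1 => [/eqP|i _].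
    by rewrite eq_sym oner_eq0.
  by apply/eqP; apply: contra_notT (Hn i) => ->.
pose s' := mkseq (fun k => if w k == 0 then s`_j0 else s`_k) (size s).
exists s', w; split => //.
- move=> z /mapP [k]; rewrite mem_iota add0n => kl ->.
  have := Hs (Ordinal kl); have := Hz (Ordinal kl) => /=.
  case: eqP => [_ _ _ | wk H5 H6]; last by split => //; apply: H5; apply/eqP.
  by split; [apply: Hs | apply: Hz].
- by rewrite size_mkseq.
- rewrite H4 size_mkseq; apply: eq_bigr => i _; rewrite nth_mkseq //.
  by case: eqP => // ->; rewrite !scale0r.
Qed.



Lemma lambda_ex {R : realType} {T : eqType} (s : seq T) (f g : T -> R) :
  exists l, 0 <= l /\ forall p, p \in s -> 0 < g p -> f p < l * g p.
Proof.
elim: s => [|x s [l [l0 Hl]]]; first by exists 0.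
exists (l + (`|f x| + 1) / `|g x|); split.
  by rewrite addr_ge0 // divr_ge0 // addr_ge0.
move=> p; rewrite inE => /orP [/eqP -> gx|ps gp].
  rewrite mulrDl (gtr0_norm gx) divfK ?gt_eqF //.
  have := ler_norm (f x); have := mulr_ge0 l0 (ltW gx); lra.
rewrite mulrDl; have := Hl p ps gp.
have : 0 <= (`|f x| + 1) / `|g x| * g p by rewrite mulr_ge0 ?divr_ge0 ?addr_ge0 // ltW.
lra.
Qed.

Lemma face_sub {R : realType} {n : nat} (C F : set 'rV[R]_n) : face C F -> F `<=` C.
Proof. by move=> [a [b [_ ->]]] y []. Qed.

Lemma face_conv {R : realType} {n : nat} (Q F : set 'rV[R]_n) :
  face (conv Q) F -> F = conv (Q `&` F).
Proof.
move=> [a [b [Hv HF]]]; rewrite convE in Hv; rewrite HF !convE.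
have HvQ : forall q, Q q -> dot a q <= b by move=> q /sub_convN /Hv.
apply/seteqP; split => y.
- move=> [Cy Hy]; apply: (convN_mono _ (convN_face HvQ Cy Hy)) => q [Qq Hq].
  by split; [|split; [apply: sub_convN|]].
- move=> Hy; split.
    by apply: (convN_mono _ Hy) => q [].
  by apply: convN_eq Hy => q [_ []].
Qed.

Lemma face_trans {R : realType} {n : nat} (P S G : set 'rV[R]_n) :
  finite_set P -> face (conv P) S -> face S G -> face (conv P) G.
Proof.
move=> /finite_seqP [s Ps] [a [b [Hv HS]]] [a' [b' [Hv' HG]]].
have [l [l0 Hl]] := lambda_ex s (fun p => dot a' p - b') (fun p => b - dot a p).
rewrite convE in Hv HS *.
have HvP : forall q, P q -> dot (a' + l *: a) q <= b' + l * b.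
  move=> q Pq; rewrite dotDl dotZl.
  have Cq := sub_convN Pq; have := Hv q Cq; rewrite le_eqVlt => /orP [/eqP E|E].
    have : S q by rewrite HS.
    move=> /Hv'; rewrite E; lra.
  have qs : q \in s by move: Pq; rewrite Ps.
  have E' : 0 < b - dot a q by rewrite subr_gt0.
  have := Hl q qs E'.
  have := mulr_ge0 l0 (ltW E').
  nra.
have Hkey : forall q, P q -> dot (a' + l *: a) q = b' + l * b ->
    dot a q = b /\ dot a' q = b'.
  move=> q Pq; rewrite dotDl dotZl.
  have Cq := sub_convN Pq; have := Hv q Cq; rewrite le_eqVlt => /orP [/eqP E|E].
    by rewrite E => H; split => //; lra.
  have qs : q \in s by move: Pq; rewrite Ps.
  have E' : 0 < b - dot a q by rewrite subr_gt0.
  have := Hl q qs E'.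
  nra.
exists (a' + l *: a), (b' + l * b); split.
  by move=> y; apply: convN_le.
apply/seteqP; split => y.
  rewrite HG HS => -[[Cy Ey] E'y]; split => //.
  by rewrite dotDl dotZl Ey E'y.
move=> [Cy Ey]; have Cy' := convN_face HvP Cy Ey.
rewrite HG HS; split; first split => //.
  by apply: convN_eq Cy' => q [Pq /Hkey] => /(_ Pq) [].
by apply: convN_eq Cy' => q [Pq /Hkey] => /(_ Pq) [].
Qed.



Lemma count_mono_in {T : eqType} (a b : pred T) (s : seq T) :
  (forall x, x \in s -> a x -> b x) -> (count a s <= count b s)%N.
Proof.
elim: s => //= x s IH H; apply: leq_add.
  by case: (a x) (H x (mem_head _ _)) => // ->.
by apply: IH => y ys; apply: H; rewrite inE ys orbT.
Qed.

Lemma count_eq_in {T : eqType} (a b : pred T) (s : seq T) :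
  (forall x, x \in s -> a x -> b x) -> count a s = count b s ->
  forall x, x \in s -> b x -> a x.
Proof.
elim: s => //= x s IH H E.
have Hs : forall y, y \in s -> a y -> b y by move=> y ys; apply: H; rewrite inE ys orbT.
have Hx := H x (mem_head _ _).
have c1 := count_mono_in Hs.
have ab : (a x <= b x)%N by case: (a x) Hx => // ->.
have [Ex Es] : (a x = b x :> nat) /\ count a s = count b s by lia.
move=> y; rewrite inE => /orP [/eqP -> | ys].
  by move: Ex; case: (a x); case: (b x).
exact: IH.
Qed.

Lemma max_face_ex {R : realType} {n : nat} (Q D G : set 'rV[R]_n) :
  finite_set Q -> face (conv Q) G -> ~ pmeets G D ->
  exists H, max_disj_face Q D H /\ G `<=` H.
Proof.
move=> /finite_seqP [s Qs] fG dG.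
pose cnt (F : set 'rV[R]_n) := count (fun x => `[< F x >]) s.
suff: forall k F, (size s - cnt F < k)%N -> face (conv Q) F -> ~ pmeets F D ->
    G `<=` F -> exists H, max_disj_face Q D H /\ G `<=` H.
  by move=> /(_ (size s - cnt G).+1 G (ltnSn _) fG dG (@subset_refl _ _)).
elim=> // k IH F lt fF dF GF.
have [Hm|Hn] := pselect (forall G', face (conv Q) G' -> ~ pmeets G' D -> F `<=` G' -> G' = F).
  by exists F; split => //; split.
have [G' HG'] : exists G', ~ (face (conv Q) G' -> ~ pmeets G' D -> F `<=` G' -> G' = F)
  by apply/existsNP.
move/not_implyP: HG' => [fG' /not_implyP [dG' /not_implyP [FG' neq]]].
apply: (IH G') => //; last by apply: subset_trans FG'.
have c1 : (cnt F <= cnt G')%N.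
  by apply: count_mono_in => x _ /asboolP /FG' /asboolP.
have c2 : cnt F != cnt G'.
  apply/eqP => E; apply: neq.
  have sub := count_eq_in (fun x _ (h : `[< F x >]) => introT (asboolP _) (FG' x (elimT (asboolP _) h))) E.
  apply/seteqP; split => // y Gy; rewrite (face_conv fF); move: Gy; rewrite (face_conv fG').
  rewrite !convE; apply: convN_mono => x [Qx G'x]; split => //.
  have xs : x \in s by move: Qx; rewrite Qs.
  by apply/asboolP; apply: sub xs _; apply/asboolP.
have cs : (cnt G' <= size s)%N by apply: count_size.
lia.
Qed.



Lemma row_free_rowsub {F : fieldType} m m' n (f : 'I_m' -> 'I_m) (A : 'M[F]_(m, n)) :
  injective f -> row_free A -> row_free (rowsub f A).
Proof.
move=> fi /row_freeP [B AB]; apply/row_freeP.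
exists (B *m (rowsub f 1%:M)^T).
rewrite rowsubE -!mulmxA (mulmxA A) AB mul1mx.
apply/matrixP => i j; rewrite !mxE (bigD1 (f i)) //= big1 => [|k kf].
  by rewrite !mxE eqxx mul1r addr0 (inj_eq fi) eq_sym.
by rewrite !mxE eq_sym (negPf kf) mul0r.
Qed.

Lemma aff_indep_take {R : realType} {n : nat} (s : seq 'rV[R]_n) k :
  aff_indep s -> aff_indep (take k.+1 s).
Proof.
case: s => [//|x t] /=.
have le : (size (take k t) <= size t)%N by rewrite size_take_min geq_minr.
pose f := fun i : 'I_(size (take k t)) => widen_ord le i.
have fi : injective f by move=> i j /(congr1 val) /= /val_inj.
move=> /(row_free_rowsub fi).
congr (is_true (row_free _)); apply/matrixP => i j; rewrite !mxE /= nth_take //.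
have := ltn_ord i; have := size_take_min k t; move: (nat_of_ord i) => z; lia.
Qed.

Lemma has_dim_uniq {R : realType} {n : nat} (S : set 'rV[R]_n) d d' :
  has_dim S d -> has_dim S d' -> d = d'.
Proof.
wlog: d d' / (d <= d')%N => [H|le].
  by case: (leqP d d') => [le|/ltnW le] A B; [apply: H | symmetry; apply: H].
move=> [_ H2] [[s [ss Ss ind]] _].
case: (ltngtP d d') le => // lt _; exfalso; apply: H2.
exists (take d.+2 s); split.
- by rewrite size_takel // ss.
- by move=> x /mem_take /Ss.
- exact: aff_indep_take.
Qed.



Lemma conv_capS {R : realType} {n : nat} (P S Q0 : set 'rV[R]_n) :
  face (conv P) S -> Q0 `<=` P -> conv Q0 `&` S = conv (Q0 `&` S).
Proof.
move=> fS QP; have SE := face_conv fS.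
move: fS => [a [b [Hv HS]]]; rewrite convE in Hv.
have CQ : conv Q0 `<=` conv P by rewrite !convE; apply: convN_mono.
apply/seteqP; split => y.
- move=> [Cy Sy]; have := Sy; rewrite HS => -[_ Ey].
  have Hv0 : forall q, Q0 q -> dot a q <= b.
    by move=> q /QP /sub_convN /Hv.
  move: Cy; rewrite !convE => Cy.
  apply: (convN_mono _ (convN_face Hv0 Cy Ey)) => q [Qq Eq]; split => //.
  by split => //; apply: sub_convN; apply: QP.
- move=> Hy; split.
    by move: Hy; rewrite !convE; apply: convN_mono => q [].
  rewrite SE; move: Hy; rewrite !convE; apply: convN_mono => q [Qq Sq]; split => //.
  exact: QP.
Qed.

Lemma face_capS {R : realType} {n : nat} (P S H : set 'rV[R]_n) :
  face (conv P) S -> face (conv P) H -> face S (H `&` S).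
Proof.
move=> fS [a [b [Hv HH]]]; have SC := face_sub fS.
exists a, b; split; first by move=> y /SC /Hv.
rewrite HH; apply/seteqP; split => y.
- by move=> [[_ E] Sy].
- by move=> [Sy E]; split => //; split => //; apply: SC.
Qed.

Unset Implicit Arguments. Set Strict Implicit.
Theorem mainTheorem7 (R : realType) (n : nat) (P : set 'rV[R]_n)
    (D : 'I_n -> set 'rV[R]_n) (S : set 'rV[R]_n) :
  finite_set P -> (forall x, P x -> integral_pt x) ->
  semi_interlaced P D -> suture P D S ->
  [/\ (forall d, has_dim S d -> nmeet D S = d),
      (forall i, pmeets (D i) S -> daughter (setI P S) (setI (D i) S)) &
      (forall F e, face S F -> has_dim F e ->
         (e <= nmeet (fun i => setI (D i) S) F)%N)].
Proof.
move=> finP _ [Hdau Hsemi] [fS [d [dS nS]]].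
have SE := face_conv fS.
have SC := face_sub fS.
have finPS : finite_set (P `&` S) by apply: finite_setIl.
have K1 : forall G, face (conv (P `&` S)) G -> face (conv P) G.
  by move=> G; rewrite -SE; apply: face_trans.
have K2 : forall H, face (conv P) H -> face (conv (P `&` S)) (H `&` S).
  move=> H fH; have := face_capS fS fH; by rewrite {1}SE.
have GS : forall G, face (conv (P `&` S)) G -> G `<=` S.
  by move=> G fG y Gy; rewrite SE; apply: face_sub fG _ Gy.
split.
- by move=> d' dS'; rewrite nS; apply: has_dim_uniq dS dS'.
- move=> i mi; have [Dne [Q0 [fQ0 Q0P DQ]] Hdisj Hd] := Hdau i.
  have lift : forall G, face (conv (P `&` S)) G -> ~ pmeets G (D i `&` S) ->
      ~ pmeets G (D i).
    move=> G fG nG [x [Gx Dx]]; apply: nG; exists x; split => //; split => //.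
    by move: (face_sub fG Gx); rewrite -SE.
  split.
  + by move: mi => [x [Dx Sx]]; exists x.
  + exists (Q0 `&` S); split.
    * exact: finite_setIl.
    * by move=> x [/Q0P Px Sx].
    * by rewrite DQ; exact: (conv_capS fS Q0P).
  + move=> G1 G2 [fG1 dG1 mG1] [fG2 dG2 mG2] neq [x [G1x G2x]].
    have [H1 [[fH1 dH1 mH1] GH1]] := max_face_ex finP (K1 _ fG1) (lift _ fG1 dG1).
    have [H2 [[fH2 dH2 mH2] GH2]] := max_face_ex finP (K1 _ fG2) (lift _ fG2 dG2).
    have EH : H1 = H2.
      have [//|nH] := pselect (H1 = H2).
      exfalso; apply: (Hdisj H1 H2 (And3 fH1 dH1 mH1) (And3 fH2 dH2 mH2) nH).
      by exists x; split; [apply: GH1|apply: GH2].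
    subst H2.
    have dHS : ~ pmeets (H1 `&` S) (D i `&` S).
      by move=> [y [[Hy _] [Dy _]]]; apply: dH1; exists y.
    have E1 := mG1 _ (K2 _ fH1) dHS (fun y Gy => conj (GH1 y Gy) (GS _ fG1 y Gy)).
    have E2 := mG2 _ (K2 _ fH1) dHS (fun y Gy => conj (GH2 y Gy) (GS _ fG2 y Gy)).
    by apply: neq; rewrite -E1 -E2.
  + set U := [set x | exists G, max_disj_face P (D i) G /\ G x].
    set US := [set x | exists G, max_disj_face (P `&` S) (D i `&` S) G /\ G x].
    have E : (P `\` U) `&` S = (P `&` S) `\` US.
      apply/seteqP; split => x.
      - move=> [[Px nU] Sx]; split => // -[G [[fG dG mG] Gx]]; apply: nU.
        have [H [mH GH]] := max_face_ex finP (K1 _ fG) (lift _ fG dG).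
        by exists H; split => //; apply: GH.
      - move=> [[Px Sx] nUS]; split => //; split => // -[H [[fH dH mH] Hx]].
        apply: nUS.
        have dHS : ~ pmeets (H `&` S) (D i `&` S).
          by move=> [y [[Hy _] [Dy _]]]; apply: dH; exists y.
        have [G [mG GG]] := max_face_ex finPS (K2 _ fH) dHS.
        by exists G; split => //; apply: GG.
    have := @conv_capS R n P S (P `\` U) fS (fun x (h : (P `\` U) x) => h.1).
    by rewrite -Hd E.
- move=> F e fF dF.
  have fF' := face_trans finP fS fF.
  apply: leq_trans (Hsemi F e fF' dF) _.
  rewrite /nmeet; apply: fintype.subset_leq_card; apply/fintype.subsetP => i; rewrite !inE => /asboolP [x [Dx Fx]].
  apply/asboolP; exists x; split => //; split => //.
  exact: face_sub fF _ Fx.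
Qed.
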